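(* Let $n\ge4$ be even and $\eta$ a choice function. For every $m\in\mathbb{N}$ and every pair of distinct words $w,v\in\mathcal{A}_n^m$, $\phi^\eta_w((0,1)^2)\cap\phi^\eta_v((0,1)^2)=\emptyset$ and $\phi^\eta_w((0,1)^2)\subset(0,1)^2$.
   Context: Fix an even integer $n\ge4$ and let $\mathcal{A}_n=\{1,\dots,5n-6\}$. $\mathcal{A}_n^m$ is the set of words of length $m$ over $\mathcal{A}_n$ ($\mathcal{A}_n^0=\{\varepsilon\}$), $\mathcal{A}_n^*=\bigcup_{m\ge0}\mathcal{A}_n^m$. Define maps $\psi^1_{n,j},\psi^2_{n,j}:\mathbb{R}^2\to\mathbb{R}^2$, $j\in\mathcal{A}_n$, each of the form $x\mapsto\frac1n x+b$: for $j=1,\dots,4n-4$, $\psi^1_{n,j}=\psi^2_{n,j}$ map $[0,1]^2$ onto the $4n-4$ squares of the grid of $n^2$ closed squares of side $1/n$ in $[0,1]^2$ that meet $\partial[0,1]^2$ (fixed enumeration); for $j=4n-3+i$, $i=0,\dots,\frac n2-2$, $\psi^1_{n,j}(x)=\psi^2_{n,j}(x)=\frac1nx+(\frac12+\frac in,\frac1n)$; for $j=4n+\frac n2-4+i$, $i=0,\dots,\frac n2-2$, $\psi^1_{n,j}(x)=\frac1nx+(\frac{i+1}n,\frac2n)$ and $\psi^2_{n,j}(x)=\frac1nx+(\frac{i+1}n,\frac1n)$. A choice function is any $\eta:\mathcal{A}_n^*\to\{1,2\}$. Set $\phi^\eta_\varepsilon=\mathrm{id}$ and for $w=i_1\cdots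 i_m$, $\phi^\eta_w=\psi^{\eta(\varepsilon)}_{n,i_1}\circ\psi^{\eta(i_1)}_{n,i_2}\circ\cdots\circ\psi^{\eta(i_1\cdots i_{m-1})}_{n,i_m}$. *)

(* Defs.v *)
From Stdlib Require Import Reals Lra Lia List Arith.
Import ListNotations.
Open Scope R_scope.

Definition point := (R * R)%type.

(* Grid square with lower-left corner (a/n, b/n), a b < n, meets the
   boundary of [0,1]^2. *)
Definition boundary_square (n : nat) (ab : nat * nat) : Prop :=
  let (a, b) := ab in
  (a < n)%nat /\ (b < n)%nat /\
  (a = 0%nat \/ b = 0%nat \/ a = (n - 1)%nat \/ b = (n - 1)%nat).

Definition boundary_enum (n : nat) (e : nat -> nat * nat) : Prop :=
  (forall j, (1 <= j <= 4 * n - 4)%nat -> boundary_square n (e j)) /\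
  (forall j j', (1 <= j <= 4 * n - 4)%nat -> (1 <= j' <= 4 * n - 4)%nat ->
      e j = e j' -> j = j') /\
  (forall ab, boundary_square n ab ->
      exists j, (1 <= j <= 4 * n - 4)%nat /\ e j = ab).

(* translation vector b of psi^k_{n,j}; k = 1 selects psi^1, otherwise psi^2 *)
Definition psi_shift (n : nat) (e : nat -> nat * nat) (k j : nat) : point :=
  if Nat.leb j (4 * n - 4) then
    (INR (fst (e j)) / INR n, INR (snd (e j)) / INR n)
  else if Nat.leb j (4 * n + n / 2 - 5) then
    let i := (j - (4 * n - 3))%nat in
    (1 / 2 + INR i / INR n, 1 / INR n)
  else
    let i := (j - (4 * n + n / 2 - 4))%nat in
    if Nat.eqb k 1 then (INR (i + 1) / INR n, 2 / INR n)
    else (INR (i + 1) / INR n, 1 / INR n).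

Definition psi (n : nat) (e : nat -> nat * nat) (k j : nat) (x : point) : point :=
  (fst x / INR n + fst (psi_shift n e k j), snd x / INR n + snd (psi_shift n e k j)).

(* phi_from pre w = psi^{eta(pre)}_{i1} o psi^{eta(pre i1)}_{i2} o ... *)
Fixpoint phi_from (n : nat) (e : nat -> nat * nat) (eta : list nat -> nat)
    (pre w : list nat) (x : point) : point :=
  match w with
  | [] => x
  | i :: w' => psi n e (eta pre) i (phi_from n e eta (pre ++ [i]) w' x)
  end.

Definition phi (n : nat) (e : nat -> nat * nat) (eta : list nat -> nat)
    (w : list nat) : point -> point := phi_from n e eta [] w.

Definition open_square (p : point) : Prop :=
  0 < fst p < 1 /\ 0 < snd p < 1.

Definition img_open (f : point -> point) (p : point) : Prop :=
  exists q, open_square q /\ f q = p.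

Definition is_word (n m : nat) (w : list nat) : Prop :=
  length w = m /\ Forall (fun i => (1 <= i <= 5 * n - 6)%nat) w.

(* Main.v *)
Require Import Defs.
From Stdlib Require Import Reals List Arith Lra Lia.
Import ListNotations.
Open Scope R_scope.

Definition cell (n : nat) (e : nat -> nat * nat) (k j : nat) : nat * nat :=
  if Nat.leb j (4 * n - 4) then e j
  else if Nat.leb j (4 * n + n / 2 - 5) then ((n / 2 + (j - (4 * n - 3)))%nat, 1%nat)
  else ((j - (4 * n + n / 2 - 4) + 1)%nat, if Nat.eqb k 1 then 2%nat else 1%nat).

Lemma half_even n : Nat.Even n -> n = (2 * (n / 2))%nat.
Proof. intros [h ->]. rewrite (Nat.mul_comm 2 h), Nat.div_mul; lia. Qed.

Lemma psi_shift_cell n e k j : Nat.Even n -> (0 < n)%nat ->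
  psi_shift n e k j = (INR (fst (cell n e k j)) / INR n, INR (snd (cell n e k j)) / INR n).
Proof.
  intros Hev Hn. unfold psi_shift, cell.
  assert (HN : INR n <> 0) by (apply not_0_INR; lia).
  destruct (Nat.leb j (4 * n - 4)); [reflexivity|].
  destruct (Nat.leb j (4 * n + n / 2 - 5)).
  - cbn [fst snd]. f_equal.
    rewrite plus_INR. pose proof (half_even n Hev) as Hh.
    assert (INR n = 2 * INR (n/2)) as E.
    { rewrite Hh at 1. rewrite mult_INR. simpl. ring. }
    rewrite E in *. field. lra.
  - destruct (Nat.eqb k 1); simpl; f_equal.
Qed.

Lemma cell_ok n e k j : (4 <= n)%nat -> Nat.Even n -> boundary_enum n e ->
  (1 <= j <= 5 * n - 6)%nat ->
  (fst (cell n e k j) < n)%nat /\ (snd (cell n e k j) < n)%nat.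
Proof.
  intros H4 Hev [Hb _] Hj. pose proof (half_even n Hev) as Hh.
  unfold cell. remember (n / 2)%nat as h. destruct (Nat.leb j (4 * n - 4)) eqn:E1.
  - apply Nat.leb_le in E1. specialize (Hb j ltac:(lia)).
    destruct (e j) as [a b]. unfold boundary_square in Hb; cbn [fst snd] in *. lia.
  - apply Nat.leb_gt in E1. destruct (Nat.leb j (4 * n + h - 5)) eqn:E2.
    + apply Nat.leb_le in E2. cbn [fst snd]. lia.
    + apply Nat.leb_gt in E2. destruct (Nat.eqb k 1); cbn [fst snd]; lia.
Qed.

Lemma cell_inj n e k j j' : (4 <= n)%nat -> Nat.Even n -> boundary_enum n e ->
  (1 <= j <= 5 * n - 6)%nat -> (1 <= j' <= 5 * n - 6)%nat ->
  cell n e k j = cell n e k j' -> j = j'.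
Proof.
  intros H4 Hev [Hb [Hi _]] Hj Hj'. pose proof (half_even n Hev) as Hh.
  unfold cell. remember (n / 2)%nat as h.
  destruct (Nat.leb j (4 * n - 4)) eqn:E1;
  destruct (Nat.leb j' (4 * n - 4)) eqn:E1'.
  - apply Nat.leb_le in E1, E1'. apply Hi; lia.
  - apply Nat.leb_le in E1. apply Nat.leb_gt in E1'.
    specialize (Hb j ltac:(lia)). destruct (e j) as [a b]. unfold boundary_square in Hb.
    destruct (Nat.leb j' (4 * n + h - 5)) eqn:E2'.
    + apply Nat.leb_le in E2'. intros Heq; inversion Heq; subst. lia.
    + apply Nat.leb_gt in E2'. destruct (Nat.eqb k 1);
      intros Heq; inversion Heq; subst; lia.
  - apply Nat.leb_le in E1'. apply Nat.leb_gt in E1.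
    specialize (Hb j' ltac:(lia)). destruct (e j') as [a b]. unfold boundary_square in Hb.
    destruct (Nat.leb j (4 * n + h - 5)) eqn:E2.
    + apply Nat.leb_le in E2. intros Heq; inversion Heq; subst. lia.
    + apply Nat.leb_gt in E2. destruct (Nat.eqb k 1);
      intros Heq; inversion Heq; subst; lia.
  - apply Nat.leb_gt in E1, E1'.
    destruct (Nat.leb j (4 * n + h - 5)) eqn:E2;
    destruct (Nat.leb j' (4 * n + h - 5)) eqn:E2';
    try apply Nat.leb_le in E2; try apply Nat.leb_le in E2';
    try apply Nat.leb_gt in E2; try apply Nat.leb_gt in E2';
    destruct (Nat.eqb k 1); intros Heq; inversion Heq; lia.
Qed.

Lemma coord_open (N x c : R) : 0 < N -> 0 <= c -> c + 1 <= N -> 0 < x < 1 ->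
  0 < x / N + c / N < 1.
Proof.
  intros HN Hc HcN Hx. unfold Rdiv.
  assert (Hi : 0 < / N) by (apply Rinv_0_lt_compat; lra).
  assert (HNi : N * / N = 1) by (field; lra).
  split; nra.
Qed.

Lemma coord_sep (N x y : R) (c d : nat) : 0 < N -> 0 < x < 1 -> 0 < y < 1 ->
  x / N + INR c / N = y / N + INR d / N -> c = d.
Proof.
  intros HN Hx Hy H.
  assert (E : x + INR c = y + INR d).
  { apply (Rmult_eq_reg_r (/ N)); [|apply Rinv_neq_0_compat; lra].
    unfold Rdiv in H. lra. }
  assert (c < S d)%nat by (apply INR_lt; rewrite S_INR; lra).
  assert (d < S c)%nat by (apply INR_lt; rewrite S_INR; lra).
  lia.
Qed.

Section S.
Variables (n : nat) (e : nat -> nat * nat) (eta : list nat -> nat).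
Hypotheses (H4 : (4 <= n)%nat) (Hev : Nat.Even n) (Hb : boundary_enum n e).

Definition valid j := (1 <= j <= 5 * n - 6)%nat.

Lemma psi_open k j q : valid j -> open_square q -> open_square (psi n e k j q).
Proof.
  intros Hj [Hx Hy]. unfold psi. rewrite psi_shift_cell by (auto; lia).
  destruct (cell_ok n e k j H4 Hev Hb Hj) as [Ha Hb'].
  assert (0 < INR n) by (apply lt_0_INR; lia).
  assert (INR (fst (cell n e k j)) + 1 <= INR n) by (rewrite <- S_INR; apply le_INR; lia).
  assert (INR (snd (cell n e k j)) + 1 <= INR n) by (rewrite <- S_INR; apply le_INR; lia).
  split; simpl; apply coord_open; auto using pos_INR.
Qed.

Lemma psi_sep k j j' q r : valid j -> valid j' -> open_square q -> open_square r ->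
  psi n e k j q = psi n e k j' r -> j = j'.
Proof.
  intros Hj Hj' [Hx Hy] [Hx' Hy'] H. unfold psi in H.
  rewrite !psi_shift_cell in H by (auto; lia).
  assert (0 < INR n) by (apply lt_0_INR; lia).
  inversion H as [[H1 H2]].
  apply coord_sep in H1; auto. apply coord_sep in H2; auto.
  apply (cell_inj n e k j j'); auto.
  destruct (cell n e k j), (cell n e k j'); simpl in *; subst; auto.
Qed.

Lemma psi_inj k j q r : psi n e k j q = psi n e k j r -> q = r.
Proof.
  unfold psi. intros H. inversion H as [[H1 H2]].
  assert (0 < INR n) by (apply lt_0_INR; lia).
  destruct q as [a b], r as [c d]; simpl in *.
  assert (Ea : a / INR n = c / INR n) by lra.
  assert (Eb : b / INR n = d / INR n) by lra.
  unfold Rdiv in Ea, Eb.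
  apply Rmult_eq_reg_r in Ea; [|apply Rinv_neq_0_compat; lra].
  apply Rmult_eq_reg_r in Eb; [|apply Rinv_neq_0_compat; lra].
  subst; reflexivity.
Qed.

Lemma phi_open w : Forall valid w -> forall pre q, open_square q ->
  open_square (phi_from n e eta pre w q).
Proof.
  induction 1; intros pre q Hq; simpl; auto.
  apply psi_open; auto.
Qed.

Lemma phi_sep w : Forall valid w -> forall v pre q r, Forall valid v ->
  length w = length v -> w <> v -> open_square q -> open_square r ->
  phi_from n e eta pre w q = phi_from n e eta pre v r -> False.
Proof.
  induction 1 as [|i w' Hi Hw IH]; intros v pre q r Hv Hl Hne Hq Hr Heq.
  - destruct v; simpl in Hl; [congruence|discriminate].
  - destruct v as [|j v']; simpl in Hl; [discriminate|].
    inversion Hv as [|? ? Hj Hv']; subst.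
    simpl in Heq.
    assert (i = j).
    { eapply psi_sep; [exact Hi|exact Hj| | |exact Heq]; apply phi_open; auto. }
    subst j. apply psi_inj in Heq.
    eapply IH; [exact Hv'|lia| |exact Hq|exact Hr|exact Heq].
    intros ->; auto.
Qed.
End S.

Theorem lemma4p2 (n : nat) (e : nat -> nat * nat) (eta : list nat -> nat) :
  (4 <= n)%nat -> Nat.Even n -> boundary_enum n e ->
  (forall u, eta u = 1%nat \/ eta u = 2%nat) ->
  forall (m : nat) (w v : list nat),
    is_word n m w -> is_word n m v -> w <> v ->
    (~ exists p, img_open (phi n e eta w) p /\ img_open (phi n e eta v) p) /\
    (forall p, img_open (phi n e eta w) p -> open_square p).
Proof.
  intros H4 Hev Hb _ m w v [Hlw Hw] [Hlv Hv] Hne. split.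
  - intros [p [[q [Hq Eq]] [r [Hr Er]]]].
    apply (phi_sep n e eta H4 Hev Hb w Hw v [] q r Hv ltac:(lia) Hne Hq Hr).
    unfold phi in *. congruence.
  - intros p [q [Hq <-]]. apply (phi_open n e eta H4 Hev Hb); auto.
Qed.
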